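(* Let $R$ be a commutative ring with identity, let $(S,\leq)$ be a strictly ordered monoid, and let $w\in S$. Let $P_w:[[R^{S,\leq}]]\to[[R^{S,\leq}]]$ be the cut-off operator at $w$, given by $P_w(f)(s)=f(s)$ if $s<w$ and $P_w(f)(s)=0$ if $s\not<w$. Set $$A_w=\{(u,v)\in S\times S: u\not<w,\ v\not<w,\ u+v<w\},\qquad B_w=\{(u,v)\in S\times S: u<w,\ v<w,\ u+v\not<w\}.$$ Then $([[R^{S,\leq}]],P_w)$ is a Rota-Baxter algebra (of weight $-1$) if and only if $A_w=\emptyset$ and $B_w=\emptyset$.
   Context: All monoids are commutative and written additively with neutral element $0$. A partially ordered set is artinian if every strictly decreasing sequence is finite, and narrow if every subset of pairwise incomparable elements is finite. A strictly ordered monoid is a commutative monoid $S$ with a partial order $\leq$ such that $s<s'$ implies $s+t<s'+t$ for all $s,s',t\in S$. The ring of generalized power series $[[R^{S,\leq}]]$ is the set of maps $f:S\to R$ with artinian and narrow support $\{s: f(s)\neq 0\}$, with pointwise addition and convolution $(fg)(s)=\sum f(u)g(v)$ over the finitely many pairs $(u,v)$ with $u+v=s$, $f(u)\neq0$, $g(v)\neq0$. A Rota-Baxter algebra (of weight $-1$) is an associative $R$-algebra $A$ with an $R$-linear $P:A\to A$ satisfying $P(x)P(y)=P(xP(y))+P(P(x)y)-P(xy)$ for all $x,y\in A$. *)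

(* Defs.v *)
From Stdlib Require Import List ClassicalEpsilon.
From HB Require Import structures.
From mathcomp Require Import all_boot all_algebra.
Set Implicit Arguments. Unset Strict Implicit. Unset Printing Implicit Defensive.
Import GRing.Theory.
Local Open Scope ring_scope.

Section GPS.
Variables (S : Type) (add : S -> S -> S) (zero : S) (le : S -> S -> Prop).

Definition slt (s t : S) : Prop := le s t /\ s <> t.

Definition strictly_ordered_monoid : Prop :=
  (forall a b c, add a (add b c) = add (add a b) c) /\
  (forall a b, add a b = add b a) /\
  (forall a, add zero a = a) /\
  (forall a, le a a) /\
  (forall a b, le a b -> le b a -> a = b) /\
  (forall a b c, le a b -> le b c -> le a c) /\
  (forall s s' t, slt s s' -> slt (add s t) (add s' t)).

Definition finite_subset (A : S -> Prop) : Prop :=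
  exists l : list S, forall x, A x -> In x l.

Definition artinian (A : S -> Prop) : Prop :=
  ~ exists u : nat -> S, forall n, A (u n) /\ slt (u n.+1) (u n).

Definition narrow (A : S -> Prop) : Prop :=
  forall B : S -> Prop, (forall x, B x -> A x) ->
    (forall x y, B x -> B y -> x <> y -> ~ le x y /\ ~ le y x) ->
    finite_subset B.

Variable R : comNzRingType.

Definition support (f : S -> R) : S -> Prop := fun s => f s <> 0.

Definition gps (f : S -> R) : Prop := artinian (support f) /\ narrow (support f).

Definition pairs_of (f g : S -> R) (s : S) (p : S * S) : Prop :=
  add p.1 p.2 = s /\ f p.1 <> 0 /\ g p.2 <> 0.

(* convolution: sum over the (finitely many) pairs (u,v) with u+v=s,
   f u <> 0, g v <> 0; enumerated by any duplicate-free list (the choice of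
   enumeration does not matter). Defaults to 0 if no finite enumeration
   exists, which never happens for f, g in gps. *)
Definition gps_mul (f g : S -> R) (s : S) : R :=
  match excluded_middle_informative
          (exists l : list (S * S), NoDup l /\ forall p, In p l <-> pairs_of f g s p)
  with
  | left H => \sum_(p <- proj1_sig (constructive_indefinite_description _ H))
                 f p.1 * g p.2
  | right _ => 0
  end.

Definition gps_add (f g : S -> R) : S -> R := fun s => f s + g s.
Definition gps_opp (f : S -> R) : S -> R := fun s => - f s.
Definition gps_scale (a : R) (f : S -> R) : S -> R := fun s => a * f s.

Definition cutoff (w : S) (f : S -> R) : S -> R :=
  fun s => if excluded_middle_informative (slt s w) then f s else 0.

Definition rota_baxter_gps (P : (S -> R) -> S -> R) : Prop :=
  [/\ (forall f, gps f -> gps (P f)),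
      (forall (a b : R) f g, gps f -> gps g ->
         P (gps_add (gps_scale a f) (gps_scale b g))
         = gps_add (gps_scale a (P f)) (gps_scale b (P g))) &
      (forall f g, gps f -> gps g ->
         gps_mul (P f) (P g)
         = gps_add (gps_add (P (gps_mul f (P g))) (P (gps_mul (P f) g)))
                   (gps_opp (P (gps_mul f g))))].

End GPS.

(* Main.v *)
Require Import Defs.
From Stdlib Require Import List Permutation Classical ClassicalEpsilon FunctionalExtensionality Lia.
From mathcomp Require Import all_boot all_algebra.
Set Implicit Arguments. Unset Strict Implicit. Unset Printing Implicit Defensive.
Import GRing.Theory.

Lemma chain_ex (Q : nat -> Prop) (Rl : nat -> nat -> Prop) :
  (exists i, Q i) -> (forall i, Q i -> exists j, (i < j)%N /\ Q j /\ Rl i j) ->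
  exists phi : nat -> nat, forall n,
    (phi n < phi n.+1)%N /\ Q (phi n) /\ Rl (phi n) (phi n.+1).
Proof.
move=> [i0 Hi0] Hst.
have H : forall i, exists j, Q i -> (i < j)%N /\ Q j /\ Rl i j.
  move=> i; case: (classic (Q i)) => Qi.
    by case: (Hst i Qi) => j Hj; exists j.
  by exists 0%N.
pose nxt i := proj1_sig (constructive_indefinite_description _ (H i)).
have Hn : forall i, Q i -> (i < nxt i)%N /\ Q (nxt i) /\ Rl i (nxt i).
  move=> i; rewrite /nxt; case: constructive_indefinite_description => j /= Hj.
  exact: Hj.
pose phi n := iter n nxt i0.
have Qp : forall n, Q (phi n) by elim=> [|n IH] //; rewrite /phi iterS; case: (Hn _ IH) => _ [].
exists phi => n; rewrite /phi iterS; case: (Hn _ (Qp n)) => a [b c]; split=> //; split=> //; exact: Qp.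
Qed.

Lemma mono_lt (phi : nat -> nat) : (forall n, (phi n < phi n.+1)%N) ->
  forall a b, (a < b)%N -> (phi a < phi b)%N.
Proof.
move=> H a; elim=> [//|b IH]; rewrite ltnS leq_eqVlt => /orP[/eqP->//|/IH h].
exact: ltn_trans h (H b).
Qed.

Lemma chain_le (S : Type) (le : S -> S -> Prop) (z : nat -> S) :
  (forall a, le a a) -> (forall a b c, le a b -> le b c -> le a c) ->
  (forall n, le (z n) (z n.+1)) -> forall a b, (a <= b)%N -> le (z a) (z b).
Proof.
move=> Hr Ht H a; elim=> [|b IH]; first by rewrite leqn0 => /eqP->.
rewrite leq_eqVlt => /orP[/eqP->//|]; rewrite ltnS => /IH h.
exact: Ht h (H b).
Qed.

Lemma pigeon (T : Type) (y : nat -> T) : (forall n m, y n = y m -> n = m) ->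
  ~ exists l, forall t, (exists n, t = y n) -> In t l.
Proof.
move=> Hinj [l Hl].
have nd : NoDup (List.map y (List.seq 0 (length l).+1)).
  apply: FinFun.Injective_map_NoDup; [exact: Hinj | exact: seq_NoDup].
have inc : incl (List.map y (List.seq 0 (length l).+1)) l.
  move=> t /in_map_iff [n [<- _]]; apply: Hl; by exists n.
have := NoDup_incl_length nd inc.
rewrite length_map length_seq; lia.
Qed.

Lemma fin_enum (T : Type) (P : T -> Prop) :
  (exists l, forall x, P x -> In x l) -> exists l, NoDup l /\ forall x, In x l <-> P x.
Proof.
move=> [l Hl].
pose decT := fun x y : T => excluded_middle_informative (x = y).
pose Pb := fun x => if excluded_middle_informative (P x) then true else false.
exists (nodup decT (List.filter Pb l)); split; first exact: NoDup_nodup.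
move=> x; rewrite nodup_In filter_In /Pb; split.
  by case=> _; case: excluded_middle_informative.
move=> Px; split; first exact: Hl.
by case: excluded_middle_informative.
Qed.

Lemma inf_seq (T : Type) (P : T -> Prop) :
  ~ (exists l, forall x, P x -> In x l) ->
  exists u : nat -> T, (forall n, P (u n)) /\ (forall n m, u n = u m -> n = m).
Proof.
move=> Hn.
have H : forall l, exists x, P x /\ ~ In x l.
  move=> l; apply: NNPP => H; apply: Hn; exists l => x Px.
  apply: NNPP => Hx; apply: H; by exists x.
pose nxt l := proj1_sig (constructive_indefinite_description _ (H l)).
have Hnx : forall l, P (nxt l) /\ ~ In (nxt l) l.
  move=> l; rewrite /nxt; case: constructive_indefinite_description => //.
pose pre := fix pre n := match n with 0 => nil | k.+1 => nxt (pre k) :: pre k end.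
exists (fun n => nxt (pre n)); split; first by move=> n; case: (Hnx (pre n)).
have Hin : forall m n, (m < n)%N -> In (nxt (pre m)) (pre n).
  move=> m; elim=> [//|n IH]; rewrite ltnS leq_eqVlt => /orP[/eqP->|/IH h] /=.
    by left.
  by right.
move=> n m Heq; case: (ltngtP n m) => // h.
  by case: (Hnx (pre m)); rewrite -Heq => _ []; apply: Hin.
by case: (Hnx (pre n)); rewrite Heq => _ []; apply: Hin.
Qed.

Lemma wqo (S : Type) (le : S -> S -> Prop) (A : S -> Prop) (x : nat -> S) :
  (forall a, le a a) -> (forall a b c, le a b -> le b c -> le a c) ->
  artinian le A -> narrow le A -> (forall n, A (x n)) ->
  exists phi : nat -> nat, (forall n, (phi n < phi n.+1)%N) /\
     (forall n, le (x (phi n)) (x (phi n.+1))).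
Proof.
move=> Hr Ht Har Hna HA.
case: (classic (exists N, forall i, (N <= i)%N -> exists j, (i < j)%N /\ le (x i) (x j))).
  move=> [N HN].
  have [phi Hphi] := @chain_ex (fun i => (N <= i)%N) (fun i j => le (x i) (x j))
    (ex_intro _ N (leqnn N)) (fun i Hi => let: ex_intro j (conj a b) := HN i Hi in
        ex_intro _ j (conj a (conj (leq_trans Hi (ltnW a)) b))).
  exists phi; split=> n; by case: (Hphi n) => [a [b c]].
move=> Hno; exfalso.
have Hbad : forall N, exists i, (N <= i)%N /\ forall j, (i < j)%N -> ~ le (x i) (x j).
  move=> N; apply: NNPP => H; apply: Hno; exists N => i Hi.
  apply: NNPP => H2; apply: H; exists i; split=> // j Hj Hle; apply: H2; by exists j.
have [i0 [_ Hi0]] := Hbad 0%N.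
have [phi Hphi] := @chain_ex (fun i => forall j, (i < j)%N -> ~ le (x i) (x j)) (fun _ _ => True)
    (ex_intro _ i0 Hi0) (fun i _ => let: ex_intro j (conj a b) := Hbad i.+1 in
        ex_intro _ j (conj a (conj b I))).
have phimono := mono_lt (fun n => proj1 (Hphi n)).
pose z n := x (phi n).
have zbad : forall k l, (k < l)%N -> ~ le (z k) (z l).
  move=> k l kl; case: (Hphi k) => _ [H _]; exact: H (phimono _ _ kl).
case: (classic (exists M, forall k, (M <= k)%N -> exists l, (k < l)%N /\ slt le (z l) (z k))).
  move=> [M HM].
  have [psi Hpsi] := @chain_ex (fun i => (M <= i)%N) (fun k l => slt le (z l) (z k))
    (ex_intro _ M (leqnn M)) (fun i Hi => let: ex_intro j (conj a b) := HM i Hi in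
        ex_intro _ j (conj a (conj (leq_trans Hi (ltnW a)) b))).
  apply: Har; exists (fun n => z (psi n)) => n; split; first exact: HA.
  by case: (Hpsi n) => _ [_ h].
move=> Hno2.
have Hgood : forall M, exists k, (M <= k)%N /\ forall l, (k < l)%N -> ~ slt le (z l) (z k).
  move=> M; apply: NNPP => H; apply: Hno2; exists M => k Hk.
  apply: NNPP => H2; apply: H; exists k; split=> // l Hl Hs; apply: H2; by exists l.
have [k0 [_ Hk0]] := Hgood 0%N.
have [psi Hpsi] := @chain_ex (fun k => forall l, (k < l)%N -> ~ slt le (z l) (z k)) (fun _ _ => True)
    (ex_intro _ k0 Hk0) (fun i _ => let: ex_intro j (conj a b) := Hgood i.+1 in
        ex_intro _ j (conj a (conj b I))).
have psimono := mono_lt (fun n => proj1 (Hpsi n)).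
have key : forall a b, (a < b)%N -> ~ le (z (psi a)) (z (psi b)) /\
     (z (psi a) <> z (psi b) -> ~ le (z (psi b)) (z (psi a))).
  move=> a b ab; split; first exact: zbad (psimono _ _ ab).
  move=> neq hle; case: (Hpsi a) => _ [H _]; apply: (H (psi b) (psimono _ _ ab)).
  by split=> // e; apply: neq.
apply: (@pigeon _ (fun n => z (psi n))).
  move=> n m e; case: (ltngtP n m) => // h.
    by exfalso; case: (key _ _ h) => H _; apply: H; rewrite e.
  by exfalso; case: (key _ _ h) => H _; apply: H; rewrite e.
apply: (Hna (fun t => exists n, t = z (psi n))).
  by move=> t [n ->]; exact: HA.
move=> t1 t2 [a ->] [b ->] neq.
case: (ltngtP a b) => h.
- by case: (key _ _ h) => H1 H2; split=> //; apply: H2.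
- case: (key _ _ h) => H1 H2; split=> //; apply: H2 => e; apply: neq; by rewrite e.
- by rewrite h in neq.
Qed.

Lemma pairs_fin (S : Type) add zero le (R : comNzRingType) (f g : S -> R) s :
  strictly_ordered_monoid add zero le -> gps le f -> gps le g ->
  exists L, NoDup L /\ forall p, In p L <-> pairs_of add f g s p.
Proof.
move=> [_ [Hc [_ [Hr [Ha [Ht Hcp]]]]]] [fa fn] [ga gn].
apply: fin_enum; apply: NNPP => Hinf.
have [y [Hy Hinj]] := inf_seq Hinf.
have [phi [phim phil]] := @wqo _ le _ (fun n => (y n).1) Hr Ht fa fn (fun n => proj1 (proj2 (Hy n))).
have [psi [psim psil]] := @wqo _ le _ (fun n => (y (phi n)).2) Hr Ht ga gn
   (fun n => proj2 (proj2 (Hy (phi n)))).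
set a := phi (psi 0%N); set b := phi (psi 1%N).
have ab : (a < b)%N by apply: mono_lt => //; apply: psim.
have hu : le (y a).1 (y b).1.
  apply: (@chain_le _ le (fun n => (y (phi n)).1)) => //; exact: ltnW (psim 0%N).
have hv : le (y a).2 (y b).2 := psil 0%N.
have ne : y a <> y b by move=> e; have := Hinj _ _ e; move=> e'; rewrite e' ltnn in ab.
have sa : add (y a).1 (y a).2 = s := proj1 (Hy a).
have sb : add (y b).1 (y b).2 = s := proj1 (Hy b).
move: ne hu hv sa sb; case: (y a) => ua va; case: (y b) => ub vb /= ne hu hv sa sb.
case: (classic (ua = ub)) => eu.
  have nv : va <> vb by move=> ev; apply: ne; rewrite eu ev.
  have := Hcp va vb ua (conj hv nv); rewrite Hc (Hc vb) sa eu sb.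
  by case.
have h1 := Hcp ua ub va (conj hu eu); rewrite sa in h1.
case: (classic (va = vb)) => ev.
  by rewrite ev sb in h1; case: h1.
have := Hcp va vb ub (conj hv ev); rewrite Hc (Hc vb) sb => h2.
case: h1 => h1a h1b; case: h2 => h2a h2b; apply: h1b; exact: Ha h1a h2a.
Qed.

Local Open Scope ring_scope.

Lemma sum_perm (R : comNzRingType) (T : Type) (F : T -> R) (l1 l2 : list T) :
  Permutation l1 l2 -> \sum_(p <- l1) F p = \sum_(p <- l2) F p.
Proof.
elim=> [|x l l' _ IH|x y l|l l' l'' _ IH1 _ IH2].
- by [].
- by rewrite !big_cons IH.
- by rewrite !big_cons addrCA.
- by rewrite IH1.
Qed.

Lemma gps_mul_enum (R : comNzRingType) (S : Type) add (f g : S -> R) s (L : list (S*S)) :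
  NoDup L -> (forall p, In p L <-> pairs_of add f g s p) ->
  gps_mul add f g s = \sum_(p <- L) f p.1 * g p.2.
Proof.
move=> ndL HL; rewrite /gps_mul.
case: excluded_middle_informative => [H|H]; last by exfalso; apply: H; exists L.
case: (constructive_indefinite_description _ H) => L' [nd' HL'] /=.
apply: sum_perm; apply: NoDup_Permutation => // p.
by split=> Hp; [apply/HL; apply/HL' | apply/HL'; apply/HL].
Qed.

Lemma sum_filter (R : comNzRingType) (T : Type) (F : T -> R) P (l : list T) :
  \sum_(p <- List.filter P l) F p = \sum_(p <- l) (if P p then F p else 0).
Proof.
elim: l => [|x l IH]; first by rewrite /= !big_nil.
case Px: (P x); rewrite /= Px !big_cons IH Px //. by rewrite add0r.
Qed.

Lemma gps_mul_sup (R : comNzRingType) (S : Type) add (f g : S -> R) s (L : list (S*S)) :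
  NoDup L -> (forall p, In p L -> add p.1 p.2 = s) ->
  (forall p, pairs_of add f g s p -> In p L) ->
  gps_mul add f g s = \sum_(p <- L) f p.1 * g p.2.
Proof.
move=> nd Hs Hin.
pose P := fun p : S*S => (f p.1 != 0) && (g p.2 != 0).
rewrite (@gps_mul_enum _ _ _ _ _ _ (List.filter P L)).
- rewrite sum_filter; apply: eq_bigr => p _; rewrite /P.
  case: (boolP (f p.1 != 0)) => /= [_|]; last by rewrite negbK => /eqP->; rewrite mul0r.
  by case: (boolP (g p.2 != 0)) => //; rewrite negbK => /eqP->; rewrite mulr0.
- by apply: NoDup_filter.
- move=> p; rewrite filter_In; split.
  + case=> Hp /andP[/eqP H1 /eqP H2]; split; [exact: Hs | by split].
  + move=> Hp; split; first exact: Hin.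
    by case: Hp => _ [H1 H2]; apply/andP; split; apply/eqP.
Qed.

Lemma sum_nil (R : comNzRingType) (S : Type) add (f g : S -> R) s :
  (forall p, ~ pairs_of add f g s p) -> gps_mul add f g s = 0.
Proof.
move=> H; rewrite (@gps_mul_sup _ _ _ _ _ _ nil) ?big_nil //.
all: try exact: NoDup_nil.
all: try by move=> p /H.
Qed.

Lemma sum_one (R : comNzRingType) (S : Type) add (f g : S -> R) s u v :
  add u v = s -> (forall p, pairs_of add f g s p -> p = (u, v)) ->
  gps_mul add f g s = f u * g v.
Proof.
move=> Hs H; rewrite (@gps_mul_sup _ _ _ _ _ _ [:: (u, v)]) ?big_cons ?big_nil ?addr0 //.
- by constructor; [case | constructor].
- by move=> p [<-|[]].
- by move=> p /H ->; left.
Qed.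

Definition delta (R : comNzRingType) (S : Type) (u : S) : S -> R :=
  fun s => if excluded_middle_informative (s = u) then 1 else 0.

Lemma delta_gps (R : comNzRingType) (S : Type) le (u : S) : gps le (delta R u).
Proof.
have sup : forall s, Defs.support (delta R u) s -> s = u.
  move=> s; rewrite /Defs.support /delta; by case: (excluded_middle_informative (s = u)) => // _ /(_ erefl).
split.
- move=> [x Hx]; case: (Hx 0%N) => /sup h0 [_ ne]; case: (Hx 1%N) => /sup h1 _.
  by apply: ne; rewrite h0 h1.
- move=> B HB _; exists [:: u] => x /HB /sup ->; by left.
Qed.

Lemma delta_u (R : comNzRingType) (S : Type) (u : S) : delta R u u = 1.
Proof. by rewrite /delta; case: (excluded_middle_informative (u = u)). Qed.

Lemma delta_ne (R : comNzRingType) (S : Type) (u s : S) : delta R u s <> 0 -> s = u.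
Proof. by rewrite /delta; case: (excluded_middle_informative (s = u)) => // _ /(_ erefl). Qed.

Lemma cutoff_ne (R : comNzRingType) (S : Type) le w (f : S -> R) s :
  cutoff le w f s <> 0 -> slt le s w /\ f s <> 0.
Proof. by rewrite /cutoff; case: (excluded_middle_informative (slt le s w)) => // _ /(_ erefl). Qed.

Lemma cutoff_lt (R : comNzRingType) (S : Type) le w (f : S -> R) s :
  slt le s w -> cutoff le w f s = f s.
Proof. by rewrite /cutoff; case: (excluded_middle_informative (slt le s w)). Qed.

Lemma cutoff_nlt (R : comNzRingType) (S : Type) le w (f : S -> R) s :
  ~ slt le s w -> cutoff le w f s = 0.
Proof. by rewrite /cutoff; case: (excluded_middle_informative (slt le s w)). Qed.

From mathcomp Require Import ring.

Lemma eq_big_In (R : comNzRingType) (T : Type) (F G : T -> R) (l : list T) :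
  (forall p, In p l -> F p = G p) -> \sum_(p <- l) F p = \sum_(p <- l) G p.
Proof.
elim: l => [|x l IH] H; first by rewrite !big_nil.
rewrite !big_cons H; last by left.
by rewrite IH // => p hp; apply: H; right.
Qed.

Lemma sub_pairs (R : comNzRingType) (S : Type) add (F G f g : S -> R) s p :
  (forall x, F x <> 0 -> f x <> 0) -> (forall x, G x <> 0 -> g x <> 0) ->
  pairs_of add F G s p -> pairs_of add f g s p.
Proof. by move=> hf hg [h1 [h2 h3]]; split=> //; split; [apply: hf | apply: hg]. Qed.

Theorem proposition3p1 (R : comNzRingType) (S : Type) (add : S -> S -> S)
  (zero : S) (le : S -> S -> Prop)
  (HS : strictly_ordered_monoid add zero le) (w : S) :
  rota_baxter_gps add le (cutoff (R:=R) le w) <->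
  (~ exists u v : S, [/\ ~ slt le u w, ~ slt le v w & slt le (add u v) w]) /\
  (~ exists u v : S, [/\ slt le u w, slt le v w & ~ slt le (add u v) w]).
Proof.
have cf : forall (f : S -> R) x, cutoff le w f x <> 0 -> f x <> 0.
  by move=> f x H; case: (cutoff_ne H).
split.
- case=> _ _ Hrb; split.
  + move=> [u [v [hu hv huv]]].
    have := congr1 (fun h => h (add u v)) (Hrb _ _ (@delta_gps R S le u) (@delta_gps R S le v)).
    rewrite /= /gps_add /gps_opp !(@cutoff_lt R S le w _ _ huv).
    rewrite sum_nil; last first.
      by move=> p [_ [H1 _]]; case: (cutoff_ne H1) => h1 H2; apply: hu; rewrite -(delta_ne H2).
    rewrite sum_nil; last first.
      by move=> p [_ [_ H1]]; case: (cutoff_ne H1) => h1 H2; apply: hv; rewrite -(delta_ne H2).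
    rewrite sum_nil; last first.
      by move=> p [_ [H1 _]]; case: (cutoff_ne H1) => h1 H2; apply: hu; rewrite -(delta_ne H2).
    rewrite (@sum_one _ _ _ _ _ _ u v) //; last first.
      by case=> a b [_ [H1 H2]]; have e1 := delta_ne H1; have e2 := delta_ne H2; simpl in e1, e2; rewrite e1 e2.
    rewrite !delta_u mulr1 !add0r => /eqP; rewrite eq_sym oppr_eq0 oner_eq0.
    by [].
  + move=> [u [v [hu hv huv]]].
    have := congr1 (fun h => h (add u v)) (Hrb _ _ (@delta_gps R S le u) (@delta_gps R S le v)).
    rewrite /= /gps_add /gps_opp !(@cutoff_nlt R S le w _ _ huv).
    rewrite (@sum_one _ _ _ _ _ _ u v) //; last first.
      by case=> a b [_ [H1 H2]]; case: (cutoff_ne H1) => _ H3; case: (cutoff_ne H2) => _ H4; have e1 := delta_ne H3; have e2 := delta_ne H4; simpl in e1, e2; rewrite e1 e2.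
    rewrite !(@cutoff_lt R S le w _ _ hu) !(@cutoff_lt R S le w _ _ hv) !delta_u.
    rewrite mulr1 oppr0 !addr0 => /eqP; rewrite oner_eq0.
    by [].
- move=> [HA HB]; split.
  + move=> f [fa fn]; split.
    * move=> [x Hx]; apply: fa; exists x => n; case: (Hx n) => h1 h2; split=> //.
      exact: cf h1.
    * by move=> B HBs; apply: fn => x /HBs /cf.
  + move=> a b f g _ _; apply: functional_extensionality => s.
    rewrite /gps_add /gps_scale /cutoff.
    case: (excluded_middle_informative (slt le s w)) => _ //=.
    by rewrite !mulr0 addr0.
  + move=> f g hf hg; apply: functional_extensionality => s.
    rewrite /gps_add /gps_opp.
    case: (classic (slt le s w)) => hs.
    * have E : forall F : S -> R, cutoff le w F s = F s := fun F => cutoff_lt F hs.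
      rewrite !E.
      have [L [nd HL]] := pairs_fin s HS hf hg.
      have Ls : forall p, In p L -> add p.1 p.2 = s by move=> p /HL [].
      have Lp : forall F G : S -> R, (forall x, F x <> 0 -> f x <> 0) ->
          (forall x, G x <> 0 -> g x <> 0) ->
          forall p, pairs_of add F G s p -> In p L.
        by move=> F G hF hG p /(sub_pairs hF hG) /HL.
      have hid : forall x, f x <> 0 -> f x <> 0 by [].
      have hidg : forall x, g x <> 0 -> g x <> 0 by [].
      rewrite !(@gps_mul_sup _ _ _ _ _ _ L nd Ls) //.
      all: try (apply: Lp; move=> x h; by [apply: (cf _ _ h) | apply: h]).
      rewrite -sumrN -!big_split /=; apply: eq_big_In => p /Ls hp.
      rewrite /cutoff.
      case: (excluded_middle_informative (slt le p.1 w)) => h1;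
      case: (excluded_middle_informative (slt le p.2 w)) => h2 /=; try ring.
      by exfalso; apply: HA; exists p.1, p.2; split=> //; rewrite hp.
    * have E : forall F : S -> R, cutoff le w F s = 0 := fun F => cutoff_nlt F hs.
      rewrite !E oppr0 !addr0.
      apply: sum_nil => p [hp [H1 H2]]; case: (cutoff_ne H1) => h1 _; case: (cutoff_ne H2) => h2 _.
      by apply: HB; exists p.1, p.2; split=> //; rewrite hp.
Qed.
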